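(* Let $\mathcal{T}_2$ be the set of $s\in\mathcal{A}^*$ with $|s|\ne\mathsf{rmin}(s)+1$ and $\mathrm{sebr}(s)=0$. For every $n$ there is a bijection $$f_2:\mathcal{T}_2\cap\mathcal{A}_n\to\{(i,s^* ):s^*\in\mathcal{A}^*\cap\mathcal{A}_{n-1},\ \mathsf{rpos}(s^* )\le i<\mathsf{rmin}(s^* )\}$$ of the form $f_2(s)=(\mathsf{rpos}(s),s^* )$ with $\mathsf{asc}(s)=\mathsf{asc}(s^* )$, $\mathsf{max}(s)=\mathsf{max}(s^* )$, $\mathsf{ealm}(s)=\mathsf{ealm}(s^* )$, $\mathsf{rmin}(s)=\mathsf{rmin}(s^* )$, $\mathsf{zero}(s)=\mathsf{zero}(s^* )+\chi(\mathsf{rpos}(s)=0)$ and $\mathsf{rep}(s)=\mathsf{rep}(s^* )+1$.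
   Context: For a sequence $s$, $\mathsf{asc}(s)=|\{i:s_i<s_{i+1}\}|$. An ascent sequence is a sequence $s=(s_1,\dots,s_n)$ of non-negative integers with $s_1=0$, $s_i\le\mathsf{asc}(s_1,\dots,s_{i-1})+1$ for $i\ge2$; $\mathcal{A}_n$ is the set of those of length $n$, $|s|$ the length; $\mathcal{A}^*$ is the set of all ascent sequences except those of the form $(0,1,\dots,|s|-1)$. $\mathsf{rep}(s)=|s|-|\{s_i\}|$; $\mathsf{zero}(s)=|\{i:s_i=0\}|$; $\mathsf{max}(s)=|\{i:s_i=i-1\}|$; $\mathsf{ealm}(s)=s_{\mathsf{max}(s)+1}$ if $\mathsf{max}(s)\ne|s|$, else $0$. A right-to-left minimum is an entry $s_i$ with $s_i<s_j$ for all $j>i$; $\mathsf{rmin}(s)$ is their number; they are indexed $0,\dots,\mathsf{rmin}(s)-1$ from left to right, with values $\mathrm{Rmin}(s)_m$ and positions $\mathrm{Prm}(s)_m$. $\mathsf{rpos}(s)$: $0$ if $\mathsf{rmin}(s)=|s|$; otherwise the maximal $m$ such that the value $\mathrm{Rmin}(s)_m$ occurs at least twice after position $\mathrm{Prm}(s)_{m-1}$ (for $m=0$: at least twice in $s$), and $0$ if none. $\mathrm{sebr}(s)$ is the smallest entry strictly between the two rightmost occurrences of $\mathrm{Rmin}(s)_{\mathsf{rpos}(s)}$, and $0$ if they are adjacent. $\chi(P)=1$ if $P$ holds, else $0$. *)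

(* Defs.v *)
(* sequences of naturals (0-indexed positions). *)
From mathcomp Require Import all_boot.
Set Implicit Arguments. Unset Strict Implicit. Unset Printing Implicit Defensive.

Definition asc (s : seq nat) : nat :=
  count (fun i => nth 0 s i < nth 0 s i.+1) (iota 0 (size s).-1).

Definition is_ascent (s : seq nat) : bool :=
  (0 < size s) && (nth 0 s 0 == 0) &&
  all (fun i => nth 0 s i <= (asc (take i s)).+1) (iota 1 (size s).-1).

Definition inA (n : nat) (s : seq nat) : bool := is_ascent s && (size s == n).

Definition inAstar (s : seq nat) : bool := is_ascent s && (s != iota 0 (size s)).

Definition rep (s : seq nat) : nat := size s - size (undup s).
Definition zero (s : seq nat) : nat := count (fun x => x == 0) s.
(* max(s) = #{i : s_i = i-1} (1-indexed), i.e. #{i : s_i = i} 0-indexed *)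
Definition maxs (s : seq nat) : nat :=
  count (fun i => nth 0 s i == i) (iota 0 (size s)).
(* ealm(s) = s_{max(s)+1} (1-indexed) if max(s) <> |s|, else 0 *)
Definition ealm (s : seq nat) : nat :=
  if maxs s != size s then nth 0 s (maxs s) else 0.

Definition is_rmin (s : seq nat) (i : nat) : bool :=
  all (fun j => nth 0 s i < nth 0 s j) (iota i.+1 (size s - i.+1)).
Definition Prm (s : seq nat) : seq nat := filter (is_rmin s) (iota 0 (size s)).
Definition Rmin (s : seq nat) : seq nat := map (nth 0 s) (Prm s).
Definition rmin (s : seq nat) : nat := size (Prm s).

Definition rpos_cond (s : seq nat) (m : nat) : bool :=
  if m == 0 then 2 <= count (fun x => x == nth 0 (Rmin s) 0) s
  else 2 <= count (fun x => x == nth 0 (Rmin s) m)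
                  (drop (nth 0 (Prm s) m.-1).+1 s).

Definition rpos (s : seq nat) : nat :=
  if rmin s == size s then 0
  else foldr maxn 0 (filter (rpos_cond s) (iota 0 (rmin s))).

(* smallest entry strictly between the two rightmost occurrences of
   Rmin_{rpos}; 0 if they are adjacent (or if there are fewer than two) *)
Definition sebr (s : seq nat) : nat :=
  let v := nth 0 (Rmin s) (rpos s) in
  let occ := filter (fun i => nth 0 s i == v) (iota 0 (size s)) in
  if size occ < 2 then 0 else
  let p := nth 0 occ (size occ - 2) in
  let q := nth 0 occ (size occ - 1) in
  let b := take (q - p.+1) (drop p.+1 s) in
  if b is x :: b' then foldr minn x b' else 0.

Definition inT2 (s : seq nat) : bool :=
  inAstar s && (size s != (rmin s).+1) && (sebr s == 0).

Definition target2 (n : nat) (p : nat * seq nat) : bool :=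
  inAstar p.2 && inA n.-1 p.2 && (rpos p.2 <= p.1 < rmin p.2).

(* Main.v *)
Require Import Defs.
From mathcomp Require Import all_boot zify.
Set Implicit Arguments. Unset Strict Implicit. Unset Printing Implicit Defensive.

Lemma asc_cons2 x y r : asc [:: x, y & r] = (x < y) + asc (y :: r).
Proof.
rewrite /asc /=; congr (_ + _).
by rewrite -[1]addn0 iotaDl count_map; apply: eq_count => i.
Qed.

Lemma asc_cons x l : asc (x :: l) = (if l is y :: _ then x < y else false) + asc l.
Proof. by case: l => [|y l] //; rewrite asc_cons2. Qed.

Lemma asc_plateau a v b : asc (a ++ [:: v, v & b]) = asc (a ++ v :: b).
Proof.
elim: a => [|x a IH]; first by rewrite /= asc_cons2 ltnn.
by rewrite !cat_cons asc_cons [in RHS]asc_cons IH; case: a {IH}.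
Qed.

Lemma asc_le_size l : asc l <= (size l).-1.
Proof. by rewrite /asc; apply: leq_trans (count_size _ _) _; rewrite size_iota. Qed.

Lemma asc_cat_le a b : asc a <= asc (a ++ b).
Proof.
elim: a => [|x a IH] //=.
rewrite asc_cons [in X in _ <= X]asc_cons.
case: a IH => [|y a] IH /=; first by [].
by rewrite leq_add2l.
Qed.

Definition ascP (s : seq nat) :
  is_ascent s <-> [/\ 0 < size s, nth 0 s 0 = 0 &
     forall j, 0 < j < size s -> nth 0 s j <= (asc (take j s)).+1].
Proof.
rewrite /is_ascent; split.
  case/andP => /andP [H1 /eqP H2] /allP H3; split => // j Hj.
  apply: H3; rewrite mem_iota; lia.
case=> H1 H2 H3; apply/andP; split; first by rewrite H1 H2 eqxx.
apply/allP => j; rewrite mem_iota => Hj; apply: H3; lia.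
Qed.

Lemma asc_ub s j : is_ascent s -> j < size s -> nth 0 s j <= j.
Proof.
case/ascP => _ H0 H; case: j => [|j] Hj; first by rewrite H0.
apply: leq_trans (H j.+1 _) _; first lia.
have := asc_le_size (take j.+1 s); rewrite size_take Hj /=; lia.
Qed.

Lemma rminP s i :
  reflect (forall j, i < j < size s -> nth 0 s i < nth 0 s j) (is_rmin s i).
Proof.
apply: (iffP allP) => H j Hj; apply: H; move: Hj; rewrite mem_iota; lia.
Qed.

Lemma filter_iotaS (P : pred nat) n :
  filter P (iota 0 n.+1) = filter P (iota 0 n) ++ (if P n then [:: n] else [::]).
Proof. by rewrite -addn1 iotaD filter_cat /=. Qed.

Lemma count_iotaS (P : pred nat) n :
  count P (iota 0 n.+1) = count P (iota 0 n) + P n.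
Proof. by rewrite -addn1 iotaD count_cat /= addn0. Qed.

Lemma nth_filter_iota (P : pred nat) n i : i < count P (iota 0 n) ->
  let b := nth 0 (filter P (iota 0 n)) i in
  [/\ b < n, P b & count P (iota 0 b) = i].
Proof.
elim: n i => [|n IH] i //.
rewrite count_iotaS.
rewrite filter_iotaS nth_cat size_filter.
case: (ltnP i (count P (iota 0 n))) => Hi.
  by case: (IH i Hi) => H1 H2 H3; split => //; lia.
case HP: (P n) => /=; last lia.
move=> Hi2; have -> : i = count P (iota 0 n) by lia.
by rewrite subnn /=; split.
Qed.

Lemma filter_iota_nth (P : pred nat) n b : b < n -> P b ->
  nth 0 (filter P (iota 0 n)) (count P (iota 0 b)) = b.
Proof.
move=> Hb Pb; have -> : n = b + (n - b) by lia.
rewrite iotaD filter_cat nth_cat size_filter ltnn subnn add0n.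
have -> : n - b = (n - b).-1.+1 by lia.
by rewrite /= Pb.
Qed.

Lemma count_iota_mono (P : pred nat) a b : a <= b ->
  count P (iota 0 a) <= count P (iota 0 b).
Proof.
move=> H; have -> : b = a + (b - a) by lia.
by rewrite iotaD count_cat leq_addr.
Qed.

Lemma count_iota_strict (P : pred nat) a b : a < b -> P a ->
  count P (iota 0 a) < count P (iota 0 b).
Proof.
move=> H Pa; apply: leq_trans (count_iota_mono P H).
by rewrite count_iotaS Pa addn1.
Qed.

Lemma count_iota_le (P : pred nat) b : count P (iota 0 b) <= b.
Proof. by apply: leq_trans (count_size _ _) _; rewrite size_iota. Qed.

Lemma rminE s : rmin s = count (is_rmin s) (iota 0 (size s)).
Proof. by rewrite /rmin /Prm size_filter. Qed.

Lemma rmin_le s : rmin s <= size s.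
Proof. by rewrite rminE count_iota_le. Qed.

Lemma Prm_nth s i : i < rmin s ->
  [/\ nth 0 (Prm s) i < size s, is_rmin s (nth 0 (Prm s) i) &
      count (is_rmin s) (iota 0 (nth 0 (Prm s) i)) = i].
Proof. by rewrite rminE => /nth_filter_iota. Qed.

Lemma Prm_of s b : b < size s -> is_rmin s b ->
  nth 0 (Prm s) (count (is_rmin s) (iota 0 b)) = b /\
  count (is_rmin s) (iota 0 b) < rmin s.
Proof.
move=> Hb Rb; split; first exact: filter_iota_nth.
by rewrite rminE; apply: count_iota_strict.
Qed.

Lemma Prm_lt s j i : j < i -> i < rmin s ->
  nth 0 (Prm s) j < nth 0 (Prm s) i.
Proof.
move=> Hji Hi; have Hj : j < rmin s by lia.
case: (Prm_nth Hi) => _ _ Ci; case: (Prm_nth Hj) => _ _ Cj.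
rewrite ltnNge; apply/negP => Hle.
have := count_iota_mono (is_rmin s) Hle; rewrite Ci Cj; lia.
Qed.

Lemma Prm_inj s j i : j < rmin s -> i < rmin s ->
  nth 0 (Prm s) j = nth 0 (Prm s) i -> j = i.
Proof.
move=> Hj Hi E; case: (Prm_nth Hi) => _ _ Ci; case: (Prm_nth Hj) => _ _ Cj.
by rewrite -Ci -Cj E.
Qed.

Lemma Prm_ge s i : i < rmin s -> i <= nth 0 (Prm s) i.
Proof.
move=> Hi; case: (Prm_nth Hi) => _ _ Ci.
by rewrite -[X in X <= _]Ci count_iota_le.
Qed.

Lemma Rmin_nth s i : i < rmin s -> nth 0 (Rmin s) i = nth 0 s (nth 0 (Prm s) i).
Proof. by move=> Hi; rewrite /Rmin (nth_map 0). Qed.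

Lemma last_occ (P : pred nat) n a : a < n -> P a ->
  exists z, [/\ a <= z, z < n, P z & forall l, z < l < n -> ~~ P l].
Proof.
elim: n => [|n IH] // Han Pa.
case HPn: (P n).
  exists n; split => //; try lia; move=> l; lia.
have Ha : a < n.
  rewrite ltn_neqAle -ltnS Han andbT; apply/eqP => E; by rewrite -E Pa in HPn.
case: (IH Ha Pa) => z [H1 H2 H3 H4]; exists z; split => //; first lia.
move=> l Hl; case: (ltnP l n) => Hln; first by apply: H4; lia.
have -> : l = n by lia.
by rewrite HPn.
Qed.

Lemma foldr_maxn_ge l x : x \in l -> x <= foldr maxn 0 l.
Proof.
elim: l => [|y l IH] //=; rewrite in_cons => /orP [/eqP ->|H].
  exact: leq_maxl.
by apply: leq_trans (IH H) (leq_maxr _ _).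
Qed.

Lemma foldr_maxn_ub l i : (forall x, x \in l -> x <= i) -> foldr maxn 0 l <= i.
Proof.
elim: l => [|y l IH] //= H; rewrite geq_max H ?mem_head //.
by apply: IH => x Hx; apply: H; rewrite in_cons Hx orbT.
Qed.

Lemma foldr_minn_mem x l : foldr minn x l \in x :: l.
Proof.
elim: l => [|y l IH] //=; first by rewrite mem_head.
rewrite /minn; case: ifP => _; rewrite !in_cons ?eqxx ?orbT //.
by move: IH; rewrite in_cons => /orP [->|->]; rewrite ?orbT.
Qed.

Lemma nth_mkseq_count (P : pred nat) s :
  count P s = count (fun i => P (nth 0 s i)) (iota 0 (size s)).
Proof. by rewrite -{1}(mkseq_nth 0 s) /mkseq count_map. Qed.

Lemma take_drop_iota s d c : d + c <= size s ->
  take c (drop d s) = map (nth 0 s) (iota d c).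
Proof.
move=> H; rewrite -{1}(mkseq_nth 0 s) /mkseq -map_drop -map_take drop_iota take_iota.
congr (map _ (iota _ _)); lia.
Qed.

Lemma asc_fix t k : is_ascent t -> k < size t -> nth 0 t k = k ->
  forall j, j <= k -> nth 0 t j = j.
Proof.
move=> At Hk Ek.
have Hub := fun j => @asc_ub t j At.
case/ascP: (At) => _ H0 Hasc.
case: k Hk Ek => [|k] Hk Ek j Hj.
  by have -> : j = 0 by lia.
have Hc : asc (take k.+1 t) = k.
  have := Hasc k.+1 (ltac:(lia)); rewrite Ek.
  have := asc_le_size (take k.+1 t); rewrite size_take Hk /=; lia.
have Hall : forall x, x < k -> nth 0 t x < nth 0 t x.+1.
  move: Hc; rewrite /asc size_take Hk /= => Hc.
  have : all (fun i => nth 0 (take k.+1 t) i < nth 0 (take k.+1 t) i.+1) (iota 0 k).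
    by rewrite all_count size_iota Hc.
  move=> /allP H x Hx.
  have := H x; rewrite mem_iota add0n Hx => /(_ isT).
  by rewrite !nth_take //; lia.
have Hge : forall x, x <= k -> x <= nth 0 t x.
  elim=> [|x IH] Hx //; have := Hall x (ltac:(lia)); have := IH (ltac:(lia)); lia.
case: (ltnP j k.+1) => Hjk.
  have := Hub j (ltac:(lia)); have := Hge j (ltac:(lia)); lia.
by have -> : j = k.+1 by lia.
Qed.

Lemma count2 (P : pred nat) i j n : i < j -> j < n -> P i -> P j ->
  1 < count P (iota 0 n).
Proof.
move=> Hij Hjn Pi Pj.
have := count_iota_strict Hij Pi; have := count_iota_strict Hjn Pj; lia.
Qed.

Lemma count_all_iota (P : pred nat) k :
  (forall x, x < k -> P x) -> count P (iota 0 k) = k.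
Proof.
move=> H; apply/eqP; rewrite -[X in _ == X](size_iota 0 k) -all_count.
by apply/allP => x; rewrite mem_iota => Hx; apply: H; lia.
Qed.

Lemma all_of_count_iota (P : pred nat) k :
  count P (iota 0 k) = k -> forall x, x < k -> P x.
Proof.
move=> H; have : all P (iota 0 k) by rewrite all_count size_iota H.
by move/allP => H2 x Hx; apply: H2; rewrite mem_iota; lia.
Qed.

Lemma count_none (P : pred nat) l :
  (forall x, x \in l -> ~~ P x) -> count P l = 0.
Proof. by move=> H; apply/eqP; rewrite -leqn0 leqNgt -has_count; apply/hasPn. Qed.

Lemma rmin_iota k : rmin (iota 0 k) = k.
Proof.
rewrite rminE size_iota; apply: count_all_iota => x Hx.
apply/rminP => j; rewrite size_iota => Hj.
rewrite !nth_iota; lia.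
Qed.

Lemma L_iota t : is_ascent t -> rmin t = size t -> t = iota 0 (size t).
Proof.
move=> At; rewrite rminE => /all_of_count_iota Hr.
have Hge : forall x, x < size t -> x <= nth 0 t x.
  elim=> [|x IH] Hx //.
  have /rminP /(_ x.+1) : is_rmin t x by apply: Hr; lia.
  have := IH (ltac:(lia)); move=> h1 h2; have := h2 (ltac:(lia)); lia.
apply: (@eq_from_nth _ 0); rewrite ?size_iota // => x Hx.
rewrite nth_iota // add0n; have := Hge x Hx; have := asc_ub At Hx; lia.
Qed.

Lemma ge_after t k : (forall j, j < k -> is_rmin t j && (nth 0 t j == j)) ->
  forall x, k <= x -> x < size t -> k <= nth 0 t x.
Proof.
move=> Hpre x Hx Hxs; case: k Hpre Hx => [|k] Hpre Hx //.
case/andP: (Hpre k (ltnSn k)) => /rminP H /eqP E.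
have := H x (ltac:(lia)); rewrite E; lia.
Qed.

Lemma key t : is_ascent t -> t != iota 0 (size t) -> forall k, k <= size t ->
  (forall j, j < k -> is_rmin t j && (nth 0 t j == j)) ->
  exists2 m, k <= m < rmin t & rpos_cond t m.
Proof.
move=> At Nt k; move Ed: (size t - k) => d; elim: d k Ed => [|d IH] k Ed Hk Hpre.
  case/negP: Nt; apply/eqP; apply: (@eq_from_nth _ 0); rewrite ?size_iota // => x Hx.
  rewrite nth_iota // add0n; case/andP: (Hpre x (ltac:(lia))) => _ /eqP //.
have Hks : k < size t by lia.
have Hge := ge_after Hpre.
have Etk : nth 0 t k = k.
  have := asc_ub At Hks; have := Hge k (leqnn k) Hks; lia.
case Rk: (is_rmin t k).
  case: (IH k.+1 (ltac:(lia)) Hks) => [j Hj|m Hm Cm].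
    case: (ltnP j k) => Hjk; first exact: Hpre.
    have -> : j = k by lia.
    by rewrite Rk Etk eqxx.
  by exists m => //; lia.
move/negbT: Rk; rewrite /is_rmin -has_predC => /hasP [l]; rewrite mem_iota => Hl /= Hlt.
have Htl : nth 0 t l = k.
  have := Hge l (ltac:(lia)) (ltac:(lia)); move: Hlt; rewrite Etk; lia.
case: (@last_occ (fun x => nth 0 t x == k) (size t) l (ltac:(lia)) (introT eqP Htl))
  => z [Hlz Hz /eqP Ez Hafter].
have Rz : is_rmin t z.
  apply/rminP => j Hj; have := Hafter j Hj; have := Hge j (ltac:(lia)) (ltac:(lia)).
  rewrite Ez; lia.
have Cz : count (is_rmin t) (iota 0 z) = k.
  have -> : z = k + (z - k) by lia.
  rewrite iotaD count_cat.
  have -> : count (is_rmin t) (iota 0 k) = k.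
    by apply: count_all_iota => x Hx; case/andP: (Hpre x Hx).
  rewrite add0n.
  set L := iota k _.
  have -> : count (is_rmin t) L = 0.
    rewrite -(count_pred0 L); apply: eq_in_count => x.
    rewrite mem_iota => Hx; apply/negbTE/negP => /rminP /(_ z) H.
    have := H (ltac:(lia)); rewrite Ez; have := Hge x (ltac:(lia)) (ltac:(lia)); lia.
  by rewrite addn0.
case: (Prm_of Hz Rz); rewrite Cz => Pk Hkr.
exists k; first lia.
have HR : nth 0 (Rmin t) k = k by rewrite Rmin_nth // Pk Ez.
rewrite /rpos_cond HR.
destruct k as [|k]; rewrite /=.
  rewrite nth_mkseq_count; apply: (@count2 _ 0 z) => //=; try lia.
have Rk : is_rmin t k by case/andP: (Hpre k (ltnSn k)).
have Ck : count (is_rmin t) (iota 0 k) = k.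
  apply: count_all_iota => x Hx; case/andP: (Hpre x (ltac:(lia))) => //.
case: (Prm_of (ltac:(lia) : k < size t) Rk); rewrite Ck => -> _.
rewrite nth_mkseq_count size_drop; apply: (@count2 _ 0 (z - k.+1)); try lia.
  by rewrite /= nth_drop addn0 Etk.
by rewrite /= nth_drop; apply/eqP; rewrite -Ez; congr nth; lia.
Qed.

Lemma Rmin0 s : 0 < size s -> nth 0 s 0 = 0 ->
  0 < rmin s /\ nth 0 (Rmin s) 0 = 0.
Proof.
move=> Hs H0.
case: (@last_occ (fun x => nth 0 s x == 0) (size s) 0 Hs (introT eqP H0))
  => z [_ Hz /eqP Ez Hafter].
have Rz : is_rmin s z.
  by apply/rminP => j Hj; rewrite Ez lt0n; apply: Hafter.
have Cz : count (is_rmin s) (iota 0 z) = 0.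
  apply: count_none => x.
  rewrite mem_iota => Hx; apply/negP => /rminP /(_ z) H.
  have := H (ltac:(lia)); rewrite Ez; lia.
case: (Prm_of Hz Rz); rewrite Cz => Pk Hkr; split => //.
by rewrite Rmin_nth // Pk.
Qed.

Lemma Rmin_pos s i : 0 < i -> i < rmin s -> 0 < nth 0 (Rmin s) i.
Proof.
move=> Hi0 Hi; rewrite Rmin_nth //.
have Hlt := @Prm_lt s i.-1 i (ltac:(lia)) Hi.
case: (@Prm_nth s i.-1 (ltac:(lia))) => _ /rminP R _.
case: (Prm_nth Hi) => H1 _ _.
have := R (nth 0 (Prm s) i) (ltac:(lia)); lia.
Qed.

Definition ins (i : nat) (t : seq nat) : seq nat :=
  let p := nth 0 (Prm t) i in take p t ++ nth 0 t p :: drop p t.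

Section Ins.
Variables (t : seq nat) (i : nat).
Hypothesis Hi : i < rmin t.
Let p := nth 0 (Prm t) i.
Let s := ins i t.
Let v := nth 0 t p.
Let sh j := j + (p <= j).

Lemma p_lt : p < size t.
Proof. by case: (Prm_nth Hi). Qed.

Lemma p_rmin : is_rmin t p.
Proof. by case: (Prm_nth Hi). Qed.

Lemma s_def : s = take p t ++ v :: drop p t.
Proof. by []. Qed.

Lemma s_def2 : s = take p t ++ [:: v, v & drop p.+1 t].
Proof. by rewrite s_def (drop_nth 0 p_lt). Qed.

Lemma t_def : t = take p t ++ v :: drop p.+1 t.
Proof. by rewrite -(drop_nth 0 p_lt) cat_take_drop. Qed.

Lemma size_s : size s = (size t).+1.
Proof. have := p_lt; rewrite s_def size_cat /= size_take size_drop; case: ifP; lia. Qed.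

Lemma nth_s_lo j : j <= p -> nth 0 s j = nth 0 t j.
Proof.
have Hp := p_lt; move=> Hj; rewrite s_def nth_cat size_take Hp.
case: ltnP => H; first by rewrite nth_take.
have -> : j = p by lia.
by rewrite subnn.
Qed.

Lemma nth_s_hi j : p <= j -> nth 0 s j.+1 = nth 0 t j.
Proof.
have Hp := p_lt; move=> Hj; rewrite s_def nth_cat size_take Hp.
rewrite ltnNge (ltnW (leq_ltn_trans Hj (ltnSn j))) /=.
have -> : j.+1 - p = (j - p).+1 by lia.
by rewrite /= nth_drop; congr nth; lia.
Qed.

Lemma nth_s_sh j : nth 0 s (sh j) = nth 0 t j.
Proof.
rewrite /sh; case: (leqP p j) => H /=; first by rewrite addn1 nth_s_hi.
by rewrite addn0 nth_s_lo // ltnW.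
Qed.

Lemma rmin_s_p : is_rmin s p = false.
Proof.
apply/negP => /rminP /(_ p.+1); rewrite size_s.
have := p_lt; move=> Hp /(_ (ltac:(lia))).
by rewrite nth_s_hi // nth_s_lo // ltnn.
Qed.

Lemma rmin_s_sh j : j < size t -> is_rmin s (sh j) = is_rmin t j.
Proof.
have Hp := p_lt; have Rp := p_rmin; move=> Hj.
apply/rminP/rminP; rewrite size_s => H k Hk.
  have := H (sh k); rewrite !nth_s_sh /sh; apply.
  case: (leqP p j) => H1; case: (leqP p k) => H2 /=; lia.
case: (ltnP k p) => Hkp.
  have Hjp : j < p by move: Hk; rewrite /sh; case: leqP => /= ?; lia.
  have Ej : sh j = j by rewrite /sh; case: leqP => //= ?; lia.
  rewrite Ej in Hk *; rewrite !nth_s_lo; try lia; apply: H; lia.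
case: (ltnP p k) => Hpk.
  have Ek : k = sh k.-1 by rewrite /sh; case: leqP => /= ?; lia.
  rewrite Ek !nth_s_sh; apply: H; move: Hk; rewrite /sh; case: leqP => /= ?; lia.
have Ekp : k = p by lia.
have Hjp : j < p by move: Hk; rewrite /sh Ekp; case: leqP => /= ?; lia.
have Ej : sh j = j by rewrite /sh; case: leqP => //= ?; lia.
rewrite Ej Ekp !nth_s_lo; try lia; apply: H; lia.
Qed.

Lemma Prm_s : Prm s = map sh (Prm t).
Proof.
have Hp := p_lt.
rewrite /Prm size_s.
have -> : (size t).+1 = p + (size t - p).+1 by lia.
have -> : size t = p + (size t - p) by lia.
rewrite !iotaD !filter_cat map_cat /= add0n rmin_s_p.
have -> : p + (size t - p) - p = size t - p by lia.
congr (_ ++ _).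
  rewrite map_id_in; last first.
    by move=> x; rewrite mem_filter mem_iota /sh => /andP [_ Hx]; case: leqP => /= ?; lia.
  apply: eq_in_filter => x; rewrite mem_iota => Hx.
  have Ex : x = sh x by rewrite /sh; case: leqP => /= ?; lia.
  by rewrite {1}Ex rmin_s_sh //; lia.
rewrite -[p.+1]add1n iotaDl filter_map.
have -> : map sh (filter (is_rmin t) (iota p (size t - p))) = map (addn 1) (filter (is_rmin t) (iota p (size t - p))).
  apply/eq_in_map.
  by move=> x; rewrite mem_filter mem_iota /sh => /andP [_ Hx]; case: leqP => /= ?; lia.
congr map; apply: eq_in_filter => x; rewrite mem_iota => Hx /=.
have Ex : 1 + x = sh x by rewrite /sh; case: leqP => /= ?; lia.
by rewrite Ex rmin_s_sh //; lia.
Qed.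

Lemma rmin_s : rmin s = rmin t.
Proof. by rewrite /rmin Prm_s size_map. Qed.

Lemma Rmin_s : Rmin s = Rmin t.
Proof.
rewrite /Rmin Prm_s -map_comp; apply: eq_map => x /=; exact: nth_s_sh.
Qed.

Lemma Prm_s_nth j : j < rmin t -> nth 0 (Prm s) j = nth 0 (Prm t) j + (i <= j).
Proof.
move=> Hj; rewrite Prm_s (nth_map 0) //; rewrite /sh; congr addn.
case: (ltnP j i) => H.
  by rewrite leqNgt (Prm_lt H Hi).
case: (ltnP i j) => H2; first by rewrite ltnW // (Prm_lt H2 Hj).
have -> : j = i by lia.
by rewrite leqnn.
Qed.

Lemma cond_s_i : rpos_cond s i.
Proof.
have Hp := p_lt.
have Hv : nth 0 (Rmin s) i = v by rewrite Rmin_s Rmin_nth.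
have Hc : 0 < count (fun x => x == v) t.
  by rewrite -has_count; apply/hasP; exists v => //; apply: mem_nth.
rewrite /rpos_cond; case: ifP => Hi0.
  move/eqP: Hi0 => Hi0; rewrite Hi0 in Hv; rewrite Hv.
  rewrite s_def count_cat /= eqxx -[X in _ < X]addnCA add1n ltnS.
  by rewrite -count_cat cat_take_drop.
have Ha := Prm_s_nth (ltac:(lia) : i.-1 < rmin t).
have E : (i <= i.-1) = false by move/negbT: Hi0; rewrite -lt0n => H; rewrite leqNgt; lia.
rewrite E addn0 in Ha; rewrite Hv Ha.
have Hlt := @Prm_lt t i.-1 i (ltac:(move/negbT: Hi0; rewrite -lt0n; lia)) Hi.
rewrite s_def drop_cat size_take Hp (drop_nth 0 Hp).
case: ifP => _.
  by rewrite count_cat /= eqxx; lia.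
have -> : (nth 0 (Prm t) i.-1).+1 - p = 0 by move: Hlt; rewrite /p; lia.
rewrite /= /v eqxx; lia.
Qed.

Lemma cond_s_gt m : i < m -> m < rmin t -> rpos_cond s m = rpos_cond t m.
Proof.
move=> Him Hm; have Hp := p_lt.
rewrite /rpos_cond Rmin_s; have -> : (m == 0) = false by apply/negbTE; lia.
rewrite Prm_s_nth; last lia.
have -> : (i <= m.-1) = true by apply/idP; lia.
have Hb : p <= nth 0 (Prm t) m.-1.
  case: (ltnP i m.-1) => H; first by apply/ltnW/Prm_lt => //; lia.
  by have -> : m.-1 = i by lia.
rewrite s_def drop_cat size_take Hp.
have -> : ((nth 0 (Prm t) m.-1) + 1).+1 < p = false by apply/negbTE; lia.
rewrite addn1.
have -> : (nth 0 (Prm t) m.-1).+2 - p = (nth 0 (Prm t) m.-1 - p).+2 by lia.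
rewrite /= drop_drop; congr (_ < count _ (drop _ _)); lia.
Qed.
End Ins.

Section Plateau.
Variables (a b : seq nat) (v : nat).
Let s := a ++ [:: v, v & b].
Let t := a ++ v :: b.
Let p := size a.

Lemma pl_nth_lo j : j <= p -> nth 0 s j = nth 0 t j.
Proof.
move=> Hj; rewrite /s /t !nth_cat; case: ltnP => // H.
by have -> : j - size a = 0 by rewrite /p in Hj; lia.
Qed.

Lemma pl_nth_hi j : p <= j -> nth 0 s j.+1 = nth 0 t j.
Proof.
move=> Hj; rewrite /s /t !nth_cat /p in Hj *.
rewrite ltnNge (ltnW (leq_ltn_trans Hj (ltnSn j))) /= ltnNge Hj /=.
have -> : j.+1 - size a = (j - size a).+1 by lia.
by [].
Qed.

Lemma pl_take_lo j : j <= p -> take j s = take j t.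
Proof.
move=> Hj; rewrite /s /t !take_cat; case: ltnP => // H.
by have -> : j - size a = 0 by rewrite /p in Hj; lia.
Qed.

Lemma pl_take_hi j : p < j -> asc (take j.+1 s) = asc (take j t).
Proof.
move=> Hj; rewrite /s /t !take_cat /p in Hj *.
have -> : j.+1 < size a = false by apply/negbTE; lia.
have -> : j < size a = false by apply/negbTE; lia.
have -> : j.+1 - size a = (j - size a).+1 by lia.
have -> : j - size a = (j - size a).-1.+1 by lia.
by rewrite /= asc_plateau.
Qed.

Lemma plateau_ascent : is_ascent s = is_ascent t.
Proof.
have Ss : size s = (size t).+1 by rewrite /s /t !size_cat /= addnS.
have St : p < size t by rewrite /t size_cat /p /=; lia.
apply/idP/idP => /ascP [H1 H2 H3]; apply/ascP; split.
- lia.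
- by rewrite -pl_nth_lo.
- move=> j Hj; case: (leqP j p) => Hjp.
    rewrite -pl_nth_lo // -pl_take_lo //; apply: H3; lia.
  rewrite -pl_nth_hi; last lia.
  rewrite -pl_take_hi //; apply: H3; lia.
- by rewrite Ss.
- by rewrite pl_nth_lo.
- move=> j Hj; case: (leqP j p) => Hjp.
    rewrite pl_nth_lo // pl_take_lo //; apply: H3; lia.
  case: (ltnP p.+1 j) => Hj2.
    have -> : j = j.-1.+1 by lia.
    rewrite pl_nth_hi; last lia.
    rewrite pl_take_hi; last lia.
    apply: H3; lia.
  have Ej : j = p.+1 by lia.
  rewrite Ej pl_nth_hi //.
  case: (posnP p) => Hp0.
    by rewrite Hp0 H2.
  apply: leq_trans (H3 p (ltac:(lia))) _; rewrite ltnS.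
  rewrite -pl_take_lo // /s take_cat /p ltnn subnn take0 cats0.
  rewrite take_cat ltnNge leqnSn /= subSnn /=.
  exact: asc_cat_le.
Qed.

Lemma plateau_asc : asc s = asc t.
Proof. exact: asc_plateau. Qed.

End Plateau.

Section Ins2.
Variables (t : seq nat) (i : nat).
Hypothesis Hi : i < rmin t.
Let p := nth 0 (Prm t) i.
Let s := ins i t.
Let v := nth 0 t p.

Lemma ins_ascent : is_ascent s = is_ascent t.
Proof.
by have := plateau_ascent (take p t) (drop p.+1 t) v; rewrite -(s_def2 Hi) -(t_def Hi).
Qed.

Lemma ins_asc : asc s = asc t.
Proof. by have := plateau_asc (take p t) (drop p.+1 t) v; rewrite -(s_def2 Hi) -(t_def Hi). Qed.

Lemma ins_zero : zero s = zero t + (v == 0).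
Proof.
have E : forall P : pred nat, count P t = count P (take p t) + count P (drop p t).
  by move=> P; rewrite -count_cat cat_take_drop.
rewrite /zero /s s_def count_cat E /= /v /p; lia.
Qed.

Lemma ins_rep : rep s = (rep t).+1.
Proof.
have Hp := p_lt Hi.
have Hmem : s =i t.
  move=> x; rewrite /s s_def mem_cat in_cons.
  rewrite -[in RHS](cat_take_drop p t) mem_cat (drop_nth 0 Hp) in_cons /v.
  by case: (x == nth 0 t p); rewrite ?orbT.
have Hu : size (undup s) = size (undup t).
  apply: perm_size; apply: uniq_perm; rewrite ?undup_uniq // => x.
  by rewrite !mem_undup Hmem.
rewrite /rep Hu (size_s Hi); have := size_undup t; move=> H; rewrite subSn //.
Qed.

Lemma ins_not_iota : s != iota 0 (size s).
Proof.
have Hp := p_lt Hi.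
apply/negP; rewrite /s => /eqP E.
have := nth_s_hi Hi (leqnn p); rewrite -(nth_s_lo Hi (leqnn p)).
rewrite E (size_s Hi) !nth_iota; try lia.
Qed.

Lemma ins_rpos : rmin t != size t -> rpos t <= i -> rpos s = i.
Proof.
move=> Hrt Hrp.
rewrite /rpos (rmin_s Hi).
have -> : (rmin t == size s) = false.
  by apply/negbTE; rewrite (size_s Hi); have := rmin_le t; lia.
apply/eqP; rewrite eqn_leq; apply/andP; split; last first.
  by apply: foldr_maxn_ge; rewrite mem_filter mem_iota (cond_s_i Hi) /=; lia.
apply: foldr_maxn_ub => x; rewrite mem_filter mem_iota => /andP [Hc Hx].
case: (leqP x i) => // Hxi.
move: Hc; rewrite (cond_s_gt Hi Hxi) ?add0n; last lia.
move=> Hc; suff: x <= rpos t by lia.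
rewrite /rpos (negbTE Hrt); apply: foldr_maxn_ge; rewrite mem_filter mem_iota Hc /=; lia.
Qed.

Lemma ins_sebr : rpos s = i -> sebr s = 0.
Proof.
move=> Hr; have Hp := p_lt Hi; have Rp := p_rmin Hi.
rewrite /sebr Hr (Rmin_s Hi) (Rmin_nth Hi) -/p -/v (size_s Hi).
have -> : (size t).+1 = p + (size t - p).-1.+2 by lia.
rewrite iotaD filter_cat add0n /=.
rewrite (nth_s_lo Hi (leqnn p)) (nth_s_hi Hi (leqnn p)) -/v eqxx.
set L := filter _ (iota p.+2 _).
have -> : L = [::].
  apply/eqP; rewrite -size_eq0 size_filter; apply/eqP; apply: count_none => x.
  rewrite mem_iota => Hx; have -> : x = x.-1.+1 by lia.
  rewrite (nth_s_hi Hi); last lia.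
  move/rminP: Rp => /(_ x.-1 (ltac:(lia))); rewrite -/v; lia.
set F := filter _ (iota 0 p).
rewrite size_cat /= addn2 ltnS ltnS ltn0 /=.
have -> : (size F).+2 - 1 = size F + 1 by lia.
have -> : (size F).+2 - 2 = size F by lia.
rewrite !nth_cat ltnn subnn ltnNge leq_addr /= addKn /= subnn take0 //.
Qed.
End Ins2.

Lemma rmin_neq t : is_ascent t -> t != iota 0 (size t) -> rmin t != size t.
Proof. by move=> At Nt; apply/eqP => E; move/eqP: Nt; apply; apply: L_iota. Qed.

Section Ins3.
Variables (t : seq nat) (i : nat).
Hypothesis Hi : i < rmin t.
Hypothesis At : is_ascent t.
Hypothesis Nt : t != iota 0 (size t).
Hypothesis Hrp : rpos t <= i.
Let p := nth 0 (Prm t) i.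
Let s := ins i t.

Lemma no_fix_after k : p <= k -> k < size t -> nth 0 t k != k.
Proof.
move=> Hpk Hk; apply/negP => /eqP Ek.
have Hp : p < size t := p_lt Hi; have Rp : is_rmin t p := p_rmin Hi.
have Hfix := asc_fix At Hk Ek.
case: (@key t At Nt p.+1 Hp) => [j Hj|m Hm Cm].
  rewrite Hfix; last lia.
  rewrite eqxx andbT; apply/rminP => l Hl.
  case: (leqP l p) => Hlp; first by rewrite !Hfix; lia.
  have Hpl : p < l < size t by lia.
  move/rminP: Rp => /(_ l Hpl); rewrite (Hfix p) // (Hfix j); lia.
have : m <= rpos t.
  rewrite /rpos (negbTE (rmin_neq At Nt)); apply: foldr_maxn_ge.
  by rewrite mem_filter mem_iota Cm /=; lia.
have := Prm_ge Hi; rewrite -/p; lia.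
Qed.

Lemma maxs_t : maxs t = count (fun j => nth 0 t j == j) (iota 0 p).
Proof.
have Hp : p < size t := p_lt Hi.
rewrite /maxs; have -> : size t = p + (size t - p) by lia.
rewrite iotaD count_cat add0n; set c := count _ (iota p _).
suff -> : c = 0 by rewrite addn0.
apply: count_none => x; rewrite mem_iota => Hx; apply: no_fix_after; lia.
Qed.

Lemma ins_maxs : maxs s = maxs t.
Proof.
have Hp : p < size t := p_lt Hi.
rewrite maxs_t /maxs (size_s Hi).
have -> : (size t).+1 = p + ((size t).+1 - p) by lia.
rewrite iotaD count_cat add0n; set c := count _ (iota p _).
have -> : c = 0.
  apply: count_none => x; rewrite mem_iota => Hx.
  case: (ltnP p x) => Hpx.
    have -> : x = x.-1.+1 by lia.
    rewrite (nth_s_hi Hi); last lia.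
    have := asc_ub At (ltac:(lia) : x.-1 < size t); lia.
  have Ex : x = p by lia.
  rewrite Ex (nth_s_lo Hi (leqnn p)); apply: no_fix_after => //.
rewrite addn0; apply: eq_in_count => x; rewrite mem_iota => Hx.
by rewrite (nth_s_lo Hi); last lia.
Qed.

Lemma ins_ealm : ealm s = ealm t.
Proof.
have Hp : p < size t := p_lt Hi.
have HM : maxs t <= p by rewrite maxs_t count_iota_le.
rewrite /ealm ins_maxs (size_s Hi).
have -> : (maxs t != (size t).+1) = true by apply/eqP; lia.
have -> : (maxs t != size t) = true by apply/eqP; lia.
by rewrite (nth_s_lo Hi).
Qed.
End Ins3.

Lemma foldr_maxn_mem l : l != [::] -> foldr maxn 0 l \in l.
Proof.
elim: l => [|x l IH] //= _; rewrite in_cons.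
case: l IH => [|y l] IH; first by rewrite /= maxn0 eqxx.
have := IH isT; set M := foldr maxn 0 (y :: l) => H.
rewrite /maxn; case: ltnP => _; first by rewrite H orbT.
by rewrite eqxx.
Qed.

Lemma iota_split3 (P : pred nat) d q N : d <= q -> q < N ->
  count P (iota d (N - d)) = count P (iota d (q - d)) + P q + count P (iota q.+1 (N - q.+1)).
Proof.
move=> H1 H2.
have -> : N - d = (q - d) + (N - q.+1).+1 by lia.
rewrite iotaD count_cat.
have -> : d + (q - d) = q by lia.
by rewrite /= addnA.
Qed.

Lemma drop_map_iota (s : seq nat) d : d <= size s ->
  drop d s = map (nth 0 s) (iota d (size s - d)).
Proof.
move=> H; rewrite -take_drop_iota; last lia.
by rewrite take_oversize // size_drop.
Qed.

Section Del.
Variable s : seq nat.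
Hypothesis As : is_ascent s.
Hypothesis Ns : s != iota 0 (size s).
Hypothesis Hsebr : sebr s = 0.

Let m := rpos s.
Let q := nth 0 (Prm s) m.
Let v := nth 0 s q.

Lemma m_prop : m < rmin s /\ rpos_cond s m.
Proof.
have Hrn := rmin_neq As Ns.
case: (@key s As Ns 0 (leq0n _)) => // m0 Hm0 Cm0.
have Hin : m0 \in filter (rpos_cond s) (iota 0 (rmin s)).
  by rewrite mem_filter mem_iota Cm0 /=; lia.
have Hne : filter (rpos_cond s) (iota 0 (rmin s)) != [::].
  by apply/eqP => E; rewrite E in Hin.
have := foldr_maxn_mem Hne; rewrite -/(rpos s) => H.
have Em : rpos s = foldr maxn 0 (filter (rpos_cond s) (iota 0 (rmin s))).
  by rewrite /rpos (negbTE Hrn).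
move: H; rewrite -Em -/m mem_filter mem_iota => /andP [C H]; split => //; lia.
Qed.

Lemma q_prop : q < size s /\ is_rmin s q.
Proof. by case: m_prop => H _; case: (Prm_nth H). Qed.

Lemma v_Rmin : nth 0 (Rmin s) m = v.
Proof. by case: m_prop => H _; rewrite Rmin_nth. Qed.

Lemma after_q k : q < k -> k < size s -> v < nth 0 s k.
Proof. by case: q_prop => _ /rminP H Hk1 Hk2; apply: H; lia. Qed.

Let F := filter (fun k => nth 0 s k == v) (iota 0 q).

Lemma occ_eq : filter (fun k => nth 0 s k == v) (iota 0 (size s)) = F ++ [:: q].
Proof.
case: q_prop => Hq _.
have -> : size s = q + (size s - q.+1).+1 by lia.
rewrite iotaD filter_cat add0n /= eqxx; congr (_ ++ _).
suff -> : filter (fun k => nth 0 s k == v) (iota q.+1 (size s - q.+1)) = [::] by [].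
apply/eqP; rewrite -size_eq0 size_filter; apply/eqP; apply: count_none => x.
rewrite mem_iota => Hx; have := @after_q x (ltac:(lia)) (ltac:(lia)); lia.
Qed.

Lemma exists_before : exists k, [/\ k < q, nth 0 s k = v & (0 < m -> nth 0 (Prm s) m.-1 < k)].
Proof.
case: q_prop => Hq _; case: m_prop => Hm C.
set d := if m == 0 then 0 else (nth 0 (Prm s) m.-1).+1.
have Hdq : d <= q.
  rewrite /d; case: ifP => // H0; apply: Prm_lt => //; lia.
have Hv := v_Rmin.
have Hc : 1 < count (fun k => nth 0 s k == v) (iota d (size s - d)).
  move: C; rewrite /rpos_cond /d; case: ifP => H0.
    move/eqP: H0 => H0; rewrite H0 in Hv; rewrite Hv subn0.
    by rewrite -(nth_mkseq_count (fun x => x == v)).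
  have Ha : nth 0 (Prm s) m.-1 < q by apply: Prm_lt => //; move/negbT: H0; lia.
  rewrite Hv drop_map_iota ?count_map //; lia.
rewrite (iota_split3 _ Hdq Hq) /= eqxx in Hc.
have Hc3 : count (fun k => nth 0 s k == v) (iota q.+1 (size s - q.+1)) = 0.
  apply: count_none => x; rewrite mem_iota => Hx; have := @after_q x (ltac:(lia)) (ltac:(lia)); lia.
rewrite Hc3 addn0 addn1 ltnS -has_count in Hc.
case/hasP: Hc => k; rewrite mem_iota => Hk /eqP Ek.
exists k; split => //; first lia.
move=> Hm0; move: Hk; rewrite /d; have -> : (m == 0) = false by apply/negbTE; lia.
lia.
Qed.


Lemma q_pred : 0 < q /\ nth 0 s q.-1 = v.
Proof.
case: q_prop => Hq Rq; case: m_prop => Hm C.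
case: exists_before => k [Hkq Ek Hka].
set P := fun k => nth 0 s k == v.
have HkF : k \in F by rewrite mem_filter /= Ek eqxx mem_iota.
have SF : size F = count P (iota 0 q) by rewrite size_filter.
have HF : 0 < size F by case: (F) HkF.
set p' := nth 0 F (size F).-1.
case: (@nth_filter_iota P q (size F).-1 (ltac:(lia))) => Hp'q Pp' Cp'.
rewrite -/F -/p' in Hp'q Pp' Cp'.
have Hmax : forall x, x \in F -> x <= p'.
  move=> x; rewrite mem_filter mem_iota => /andP [Px Hx].
  rewrite leqNgt; apply/negP => Hlt.
  have := count_iota_mono P Hlt; rewrite count_iotaS Pp' Cp'.
  have := @count_iota_strict P x q (ltac:(lia)) Px; lia.
move: Hsebr; rewrite /sebr -/m v_Rmin occ_eq. 
rewrite size_cat /= addn1 ltnS ltnNge HF /=.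
have -> : (size F).+1 - 1 = size F by lia.
have -> : (size F).+1 - 2 = (size F).-1 by lia.
rewrite !nth_cat ltnn subnn /= ltn_predL HF -/p'.
have Hkp : k <= p' by apply: Hmax.
case: (ltnP p'.+1 q) => Hpq; last first.
  move=> _; have Eq : q = p'.+1 by lia.
  by rewrite Eq; split => //; move/eqP: Pp'.
rewrite take_drop_iota; last lia.
have -> : q - p'.+1 = (q - p'.+2).+1 by lia.
rewrite /= => Hmin.
have := foldr_minn_mem (nth 0 s p'.+1) (map (nth 0 s) (iota p'.+2 (q - p'.+2))).
rewrite Hmin -map_cons => /mapP [k' Hk' Ek'].
have Hk'r : p' < k' < q by move: Hk'; rewrite -/(iota p'.+1 (q - p'.+2).+1) mem_iota; lia.
have Nk' : nth 0 s k' != v.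
  apply/negP => Hv; have : k' \in F by rewrite mem_filter Hv mem_iota; lia.
  move/Hmax; lia.
case: (posnP m) => Hm0.
  have H00 : nth 0 s 0 = 0 by case/ascP: As.
  have [_ R0] := Rmin0 (ltac:(lia) : 0 < size s) H00.
  have Hv := v_Rmin; rewrite Hm0 R0 in Hv.
  by move: Nk'; rewrite -Ek' -Hv eqxx.
have Ha := Hka Hm0.
case: (@Prm_nth s m.-1 (ltac:(lia))) => _ /rminP Ra _.
have := Ra k' (ltac:(lia)); rewrite -Ek'; lia.
Qed.

Let p := q.-1.
Let a := take p s.
Let b := drop q.+1 s.
Let T := a ++ v :: b.

Lemma s_split : s = a ++ [:: v, v & b].
Proof.
case: q_pred => Hq0 Hv; case: q_prop => Hq _.
rewrite /a /b -{1}(cat_take_drop p s); congr (_ ++ _).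
rewrite (drop_nth 0); last lia.
rewrite (drop_nth 0); last lia.
by rewrite /p Hv prednK.
Qed.

Lemma T_eq : take q s ++ drop q.+1 s = T.
Proof.
case: q_pred => Hq0 Hv; case: q_prop => Hq _.
have -> : q = p.+1 by rewrite /p prednK.
by rewrite (take_nth 0); [rewrite -cats1 -catA /T /a /b /p prednK // Hv | lia].
Qed.

Lemma size_a : size a = p.
Proof. case: q_prop => Hq _; rewrite /a size_take; case: ifP => //; rewrite /p; lia. Qed.

Lemma T_ascent : is_ascent T.
Proof. by rewrite /T -plateau_ascent -s_split. Qed.

Lemma size_T : size T = (size s).-1.
Proof. by rewrite /T [in RHS]s_split !size_cat /= !addnS. Qed.

Lemma T_p : nth 0 T p = v.
Proof. by rewrite /T nth_cat size_a ltnn subnn. Qed.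

Lemma T_rmin_p : is_rmin T p.
Proof.
case: q_pred => Hq0 _; case: q_prop => Hq Rq.
apply/rminP => l Hl; rewrite T_p.
have Hl' : size a <= l by rewrite size_a; lia.
rewrite -(pl_nth_hi b v Hl') -s_split; apply: after_q.
  rewrite /p in Hl; lia.
by move: Hl; rewrite size_T; lia.
Qed.

Let i := count (is_rmin T) (iota 0 p).

Lemma T_Prm : nth 0 (Prm T) i = p /\ i < rmin T.
Proof. apply: Prm_of; last exact: T_rmin_p. rewrite size_T; case: q_prop => Hq _; case: q_pred => Hq0 _; rewrite /p; lia. Qed.

Lemma ins_T : ins i T = s.
Proof.
rewrite /ins (proj1 T_Prm) T_p [in RHS]s_split.
by rewrite /T -size_a take_size_cat // drop_size_cat.
Qed.

Lemma i_eq : i = m.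
Proof.
case: T_Prm => HP Hi; case: m_prop => Hm _.
have H1 := Prm_s_nth Hi (ltac:(lia) : i < rmin T).
rewrite HP leqnn addn1 ins_T in H1.
have Hr : rmin s = rmin T by rewrite -{1}ins_T rmin_s.
apply: (@Prm_inj s) => //; first by rewrite Hr.
by rewrite H1 /p prednK //; case: q_pred.
Qed.

Lemma rpos_T : rpos T <= m.
Proof.
case: T_Prm => HP Hi; rewrite /rpos; case: ifP => // Hrn.
apply: foldr_maxn_ub => x; rewrite mem_filter mem_iota => /andP [Cx Hx].
case: (leqP x m) => // Hxm.
have Hxi : i < x by rewrite i_eq.
have := cond_s_gt Hi Hxi (ltac:(lia)); rewrite ins_T Cx => Cs.
have : x <= rpos s.
  rewrite /rpos (negbTE (rmin_neq As Ns)); apply: foldr_maxn_ge.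
  have Hr : rmin s = rmin T by rewrite -{1}ins_T rmin_s.
  by rewrite mem_filter mem_iota Cs Hr /=; lia.
rewrite -/m; lia.
Qed.
End Del.

Definition f2 (s : seq nat) : nat * seq nat :=
  let q := nth 0 (Prm s) (rpos s) in (rpos s, take q s ++ drop q.+1 s).

Lemma del_main s : inT2 s ->
  rpos s < rmin (f2 s).2 /\ ins (rpos s) (f2 s).2 = s /\ is_ascent (f2 s).2 /\
      (f2 s).2 != iota 0 (size (f2 s).2) /\ rpos (f2 s).2 <= rpos s
    /\ size (f2 s).2 = (size s).-1.
Proof.
case/andP => /andP [/andP [As Ns] Hsz] /eqP Hsebr.
rewrite /f2 /= (T_eq As Ns Hsebr).
have [HP Hi] := T_Prm As Ns Hsebr.
have Ei := i_eq As Ns Hsebr.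
have Hins := ins_T As Ns Hsebr.
rewrite Ei in Hi Hins.
split => //; split => //; split.
- exact: T_ascent.
split.
- apply/negP => /eqP E.
  have Hr : rmin s = rmin (take (nth 0 (Prm s) (rpos s)).-1 s ++
      nth 0 s (nth 0 (Prm s) (rpos s)) :: drop (nth 0 (Prm s) (rpos s)).+1 s).
    by rewrite -{1}Hins rmin_s.
  set TT := take _ s ++ _ in Hr E.
  have H1 : rmin TT = size TT by rewrite [in LHS]E rmin_iota.
  have H2 := size_T As Ns Hsebr; rewrite -/TT in H2.
  have : 0 < size s by case/ascP: As.
  by move=> H; move/negP: Hsz; apply; apply/eqP; lia.
- split; first exact: rpos_T.
  exact: size_T.
Qed.

Lemma ins_f2 t i : i < rmin t -> rpos (ins i t) = i -> f2 (ins i t) = (i, t).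
Proof.
move=> Hi Hr; rewrite /f2 /= Hr (Prm_s_nth Hi Hi) leqnn addn1.
congr pair.
have Hp := p_lt Hi.
rewrite s_def take_cat size_take Hp ltnNge leqnSn /= subSnn /= take0.
rewrite drop_cat size_take Hp.
have -> : ((nth 0 (Prm t) i).+2 < nth 0 (Prm t) i) = false by apply/negbTE; lia.
have -> : (nth 0 (Prm t) i).+2 - nth 0 (Prm t) i = 2 by lia.
rewrite /= -catA /= drop_drop add1n -(drop_nth 0 Hp); exact: cat_take_drop.
Qed.

Theorem mainTheorem9 (n : nat) :
  exists f : seq nat -> nat * seq nat,
    (forall s, inT2 s -> inA n s -> target2 n (f s)) /\
    (forall s t, inT2 s -> inA n s -> inT2 t -> inA n t -> f s = f t -> s = t) /\
    (forall p, target2 n p -> exists s, [/\ inT2 s, inA n s & f s = p]) /\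
    (forall s, inT2 s -> inA n s ->
       let ss := (f s).2 in
       (f s).1 = rpos s /\
       asc s = asc ss /\
       maxs s = maxs ss /\
       ealm s = ealm ss /\
       rmin s = rmin ss /\
       zero s = zero ss + (rpos s == 0) /\
       rep s = (rep ss).+1).
Proof.
exists f2; split; [|split; [|split]].
- move=> s Hs /andP [_ /eqP Hn].
  have [Hi [Ei [At [Nt [Hrp Hsz]]]]] := del_main Hs.
  rewrite /target2 /inAstar /inA At Nt Hsz Hn eqxx Hrp /=.
  by move: Hi; rewrite /f2.
- move=> s t Hs _ Ht _ E.
  have [_ [Es _]] := del_main Hs; have [_ [Et _]] := del_main Ht.
  have E1 : rpos s = rpos t by have := f_equal fst E.
  by rewrite -[LHS]Es -[RHS]Et E1 E.
- case=> i t; rewrite /target2 /inAstar /inA /= => /andP [/andP [/andP [At Nt] /andP [_ /eqP Hn]] /andP [Hrp Hi]].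
  have Hrn := rmin_neq At Nt.
  have Hr := ins_rpos Hi Hrn Hrp.
  exists (ins i t); split.
  + rewrite /inT2 /inAstar ins_ascent // At ins_not_iota //= (ins_sebr Hi Hr) eqxx andbT.
    rewrite (size_s Hi) (rmin_s Hi); apply/negP => /eqP E; move/eqP: Hrn; apply; lia.
  + rewrite /inA ins_ascent // At (size_s Hi) Hn /=.
    have : 0 < size t by case/ascP: At.
    by move=> H; apply/eqP; lia.
  + exact: ins_f2.
- move=> s Hs _; move: (del_main Hs); rewrite /= => H.
  split; first by [].
  move: H; set t := take _ s ++ _; set i := rpos s.
  clearbody t i => [[Hi [Ei [At [Nt [Hrp Hsz]]]]]]; subst s.
  have Hr := ins_rpos Hi (rmin_neq At Nt) Hrp.
  idtac.
  split; first exact: ins_asc.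
  split; first exact: ins_maxs.
  split; first exact: ins_ealm.
  split; first exact: rmin_s.
  split; last exact: ins_rep.
  rewrite ins_zero //; congr addn.
  have Hv : nth 0 t (nth 0 (Prm t) i) = nth 0 (Rmin t) i by rewrite Rmin_nth.
  rewrite Hv; case: (posnP i) => Hi0.
    have H00 : nth 0 t 0 = 0 by case/ascP: At.
    have H0s : 0 < size t by case/ascP: At.
    by rewrite Hi0 (proj2 (Rmin0 H0s H00)) eqxx.
  by have := Rmin_pos Hi0 Hi; case: (nth 0 (Rmin t) i) => //; case: i Hi0 {Hr Hi Hrp Hv}.
Qed.
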